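(* (i) The infinite fixed point beginning with $a$ of the morphism $a\to aba$, $b\to d$, $c\to b$, $d\to c$ is $2$-automatic. (ii) The infinite fixed point beginning with $a$ of the morphism $a\to aba$, $b\to c$, $c\to b$ is $2$-automatic; more precisely, cutting it into consecutive non-overlapping blocks of length $2$, only the blocks $ab$ and $ac$ occur, and coding $ab=0$, $ac=1$ the resulting sequence is the fixed point of $0\to 01$, $1\to 00$.
   Context: For an integer $q\ge 2$, a sequence is $q$-automatic if it is the image under a letter-to-letter map of a fixed point of a morphism all of whose letter-images have length $q$. *)

(* Defs.v *)
From mathcomp Require Import all_boot.
Set Implicit Arguments. Unset Strict Implicit. Unset Printing Implicit Defensive.

(* Infinite words over an alphabet A are functions nat -> A.
   A morphism is a map sigma : A -> seq A, extended to finite words by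
   concatenation. *)
Definition morph_word (A : Type) (sigma : A -> seq A) (w : seq A) : seq A :=
  flatten (map sigma w).

Definition prefix (A : Type) (x : nat -> A) (n : nat) : seq A := mkseq x n.

(* x is a fixed point of sigma: x = sigma(x), i.e. for every n, the image
   sigma(x_0 ... x_{n-1}) is a prefix of x.  (For non-erasing morphisms,
   which is the case for every morphism below, this is exactly x = sigma(x)
   since the images of the prefixes have unbounded length.) *)
Definition is_fixpoint (A : Type) (sigma : A -> seq A) (x : nat -> A) : Prop :=
  forall n i, i < size (morph_word sigma (prefix x n)) ->
    nth (x 0) (morph_word sigma (prefix x n)) i = x i.

(* q-automatic: image under a letter-to-letter map of a fixed point of a
   q-uniform morphism (on a finite alphabet). *)
Definition automatic (q : nat) (B : Type) (x : nat -> B) : Prop :=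
  exists (C : finType) (tau : C -> seq C) (y : nat -> C) (f : C -> B),
    (forall c, size (tau c) = q) /\ is_fixpoint tau y /\ (forall n, x n = f (y n)).

Inductive L4 : Type := a4 | b4 | c4 | d4.
Definition sigma4 (l : L4) : seq L4 :=
  match l with
  | a4 => [:: a4; b4; a4]
  | b4 => [:: d4]
  | c4 => [:: b4]
  | d4 => [:: c4]
  end.

Inductive L3 : Type := a3 | b3 | c3.
Definition sigma3 (l : L3) : seq L3 :=
  match l with
  | a3 => [:: a3; b3; a3]
  | b3 => [:: c3]
  | c3 => [:: b3]
  end.

(* The morphism 0 -> 01, 1 -> 00 on {0,1}, coded as false = 0, true = 1. *)
Definition mu01 (l : bool) : seq bool :=
  if l then [:: false; false] else [:: false; true].

(* Main.v *)
From HB Require Import structures.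
Require Import Defs.
From mathcomp Require Import all_boot.
From mathcomp Require Import zify.
Set Implicit Arguments. Unset Strict Implicit.
Set Warnings "-notation-overridden,-redundant-canonical-projection".

Definition L4enc (l : L4) : bool * bool :=
  match l with a4 => (false,false) | b4 => (false,true) | c4 => (true,false) | d4 => (true,true) end.
Definition L4dec (p : bool * bool) : L4 :=
  match p with (false,false) => a4 | (false,true) => b4 | (true,false) => c4 | (true,true) => d4 end.
Lemma L4K : cancel L4enc L4dec. Proof. by case. Qed.
HB.instance Definition _ := Finite.copy L4 (can_type L4K).
Definition L3enc (l : L3) : option bool :=
  match l with a3 => None | b3 => Some false | c3 => Some true end.
Definition L3dec (p : option bool) : L3 :=
  match p with None => a3 | Some false => b3 | Some true => c3 end.
Lemma L3K : cancel L3enc L3dec. Proof. by case. Qed.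
HB.instance Definition _ := Finite.copy L3 (can_type L3K).

Lemma half2 n : (2 * n)./2 = n. Proof. by rewrite mul2n doubleK. Qed.
Lemma half2S n : ((2 * n).+1)./2 = n.
Proof. by rewrite mul2n -[(n.*2).+1]/(true + n.*2) half_bit_double. Qed.
Lemma odd2 n : odd (2 * n) = false. Proof. by rewrite mul2n odd_double. Qed.
Lemma odd2S n : odd (2 * n).+1. Proof. by rewrite /= odd2. Qed.
Lemma evod m : exists n, m = 2 * n \/ m = (2 * n).+1.
Proof. exists m./2. have := odd_double_half m. rewrite -mul2n. case: (odd m) => /= H; [right|left]; lia. Qed.

Lemma morph_cat (A : Type) (sigma : A -> seq A) s1 s2 :
  morph_word sigma (s1 ++ s2) = morph_word sigma s1 ++ morph_word sigma s2.
Proof. by rewrite /morph_word map_cat flatten_cat. Qed.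

Lemma prefixS (A : Type) (x : nat -> A) (n : nat) : Defs.prefix x n.+1 = Defs.prefix x n ++ [:: x n].
Proof. by rewrite /Defs.prefix /mkseq -addn1 iotaD map_cat. Qed.

Definition Lsz (A : Type) (sigma : A -> seq A) (x : nat -> A) (n : nat) :=
  size (morph_word sigma (Defs.prefix x n)).

Lemma morphS (A : Type) (sigma : A -> seq A) (x : nat -> A) (n : nat) :
  morph_word sigma (Defs.prefix x n.+1) = morph_word sigma (Defs.prefix x n) ++ sigma (x n).
Proof. by rewrite prefixS morph_cat /morph_word /= cats0. Qed.

Lemma LszS (A : Type) (sigma : A -> seq A) (x : nat -> A) (n : nat) :
  Lsz sigma x n.+1 = Lsz sigma x n + size (sigma (x n)).
Proof. by rewrite /Lsz morphS size_cat. Qed.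

Lemma Lsz0 (A : Type) (sigma : A -> seq A) (x : nat -> A) : Lsz sigma x 0 = 0.
Proof. by []. Qed.

Lemma fix_local (A : Type) (sigma : A -> seq A) (x : nat -> A) :
  is_fixpoint sigma x <->
  (forall n j, j < size (sigma (x n)) -> nth (x 0) (sigma (x n)) j = x (Lsz sigma x n + j)).
Proof.
split.
- move=> H n j Hj. have := H n.+1 (Lsz sigma x n + j).
  rewrite morphS size_cat nth_cat -/(Lsz sigma x n) ltn_add2l => /(_ Hj).
  by rewrite ltnNge leq_addr /= addKn.
- move=> H n; elim: n => [|n IH] i //.
  rewrite morphS size_cat nth_cat -/(Lsz sigma x n) => Hi.
  case: ltnP => Hl; first exact: IH.
  rewrite H; last by lia.
  by rewrite subnKC.
Qed.

Lemma Lsz_unif (A : Type) (sigma : A -> seq A) (x : nat -> A) q :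
  (forall c, size (sigma c) = q) -> forall n, Lsz sigma x n = q * n.
Proof. move=> Hq; elim=> [|n IH]; first by rewrite muln0. by rewrite LszS IH Hq mulnS addnC. Qed.

Definition good (A : eqType) (sigma : A -> seq A) (a e : A) (r : A -> A) : Prop :=
  [/\ sigma a = [:: a; e; a], (forall l, l != a -> sigma l = [:: r l]),
      (forall l, l != a -> r l != a) & e != a].
Definition wrec (A : Type) (e : A) (r : A -> A) (w : nat -> A) :=
  forall n, w (2 * n) = e /\ w (2 * n).+1 = r (w n).
Definition shape (A : Type) (a : A) (x w : nat -> A) :=
  forall m, x (2 * m) = a /\ x (2 * m).+1 = w m.

Lemma wrec_ne (A : eqType) (sigma : A -> seq A) a e r w :
  good sigma a e r -> wrec e r w -> forall m, w m != a.
Proof.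
case=> _ _ Hr He Hw; elim/ltn_ind => m IH.
have [n [Em|Em]] := evod m; subst m; first by rewrite (Hw n).1.
rewrite (Hw n).2; apply: Hr; apply: IH; lia.
Qed.

Lemma Lsz_pre (A : eqType) (sigma : A -> seq A) a e r (x : nat -> A) n :
  good sigma a e r -> (forall k, k < n -> x (2 * k) = a /\ x (2 * k).+1 != a) ->
  Lsz sigma x (2 * n) = 4 * n.
Proof.
case=> Ha Hs _ _; elim: n => [|n IH] H; first by rewrite muln0.
have -> : 2 * n.+1 = (2 * n).+2 by lia.
rewrite !LszS IH; last by move=> k Hk; apply: H; lia.
have [H1 H2] := H n (ltnSn n).
rewrite H1 Ha (Hs _ H2) /=; lia.
Qed.

Lemma shape_fix (A : eqType) (sigma : A -> seq A) a e r (x w : nat -> A) :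
  good sigma a e r -> wrec e r w -> shape a x w -> is_fixpoint sigma x.
Proof.
move=> G Hw Hx; have Hne := wrec_ne G Hw.
have G' := G; case: G' => Ha Hs _ _.
have HL : forall m, Lsz sigma x (2 * m) = 4 * m.
  move=> m; apply: (Lsz_pre G) => k _; rewrite (Hx k).1 (Hx k).2; split => //.
apply/fix_local => n j.
have [m [->|->]] := evod n.
- rewrite (Hx m).1 Ha HL.
  case: j => [|[|[|j]]] //= _.
  + have -> : 4 * m + 0 = 2 * (2 * m) by lia.
    by rewrite (Hx _).1.
  + have -> : 4 * m + 1 = (2 * (2 * m)).+1 by lia.
    by rewrite (Hx _).2 (Hw m).1.
  + have -> : 4 * m + 2 = 2 * (2 * m).+1 by lia.
    by rewrite (Hx _).1.
- rewrite (Hx m).2 (Hs _ (Hne m)) LszS HL (Hx m).1 Ha.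
  case: j => [|j] //= _.
  have -> : 4 * m + 3 + 0 = (2 * (2 * m).+1).+1 by lia.
  by rewrite (Hx _).2 (Hw m).2.
Qed.

Lemma fix_shape (A : eqType) (sigma : A -> seq A) a e r (x : nat -> A) :
  good sigma a e r -> is_fixpoint sigma x -> x 0 = a ->
  wrec e r (fun m => x (2 * m).+1) /\ shape a x (fun m => x (2 * m).+1).
Proof.
move=> G /fix_local Hf H0; have G' := G; case: G' => Ha Hs Hr He.
have P : forall m, x (2 * m) = a /\ x (2 * m).+1 != a.
  elim/ltn_ind => m IH.
  have HL : forall n, n <= m -> Lsz sigma x (2 * n) = 4 * n.
    move=> n Hn; apply: (Lsz_pre G) => k Hk; apply: IH; lia.
  have [n [Em|Em]] := evod m.
  - have Hxn : x (2 * n) = a.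
      case: n Em => [|n] Em; first by rewrite muln0.
      apply: (IH _ _).1; lia.
    have E0 := Hf (2 * n) 0; have E1 := Hf (2 * n) 1.
    rewrite Hxn Ha HL /= in E0 E1; try lia.
    rewrite Em; split.
    + by rewrite E0 //; congr x; lia.
    + have -> : (2 * (2 * n)).+1 = 4 * n + 1 by lia.
      by rewrite -E1.
  - have [Ha' Hb'] := IH n ltac:(lia).
    have E2 := Hf (2 * n) 2; have E3 := Hf (2 * n).+1 0.
    rewrite Ha' Ha HL /= in E2; last by lia.
    rewrite (Hs _ Hb') LszS HL ?Ha' ?Ha /= in E3; last by lia.
    rewrite Em; split.
    + by rewrite E2 //; congr x; lia.
    + have -> : (2 * (2 * n).+1).+1 = 4 * n + 3 + 0 by lia.
      by rewrite -E3 // Hr.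
have HL : forall m, Lsz sigma x (2 * m) = 4 * m.
  by move=> m; apply: (Lsz_pre G) => k _; apply: P.
split; last by move=> m; split; [exact: (P m).1|].
move=> n; split.
- have E1 := Hf (2 * n) 1; rewrite (P n).1 Ha HL /= in E1.
  by rewrite E1 //; congr x; lia.
- have E3 := Hf (2 * n).+1 0.
  rewrite (Hs _ (P n).2) LszS HL (P n).1 Ha /= in E3.
  by rewrite E3 //; congr x; lia.
Qed.

Fixpoint wf (A : Type) (e : A) (r : A -> A) (f m : nat) : A :=
  match f with
  | 0 => e
  | f'.+1 => if odd m then r (wf e r f' m./2) else e
  end.
Definition wz (A : Type) (e : A) (r : A -> A) (m : nat) := wf e r m.+1 m.

Lemma wf_stable (A : Type) (e : A) (r : A -> A) f g m :
  m < f -> m < g -> wf e r f m = wf e r g m.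
Proof.
elim: f g m => [|f IH] [|g] m //= Hf Hg.
case Ho: (odd m) => //; congr r; apply: IH.
- have := odd_double_half m; rewrite Ho -mul2n; lia.
- have := odd_double_half m; rewrite Ho -mul2n; lia.
Qed.

Lemma wfS (A : Type) (e : A) (r : A -> A) f m :
  wf e r f.+1 m = if odd m then r (wf e r f m./2) else e.
Proof. by []. Qed.

Lemma wz_rec (A : Type) (e : A) (r : A -> A) : wrec e r (wz e r).
Proof.
move=> n; rewrite /wz; split.
- by rewrite wfS odd2.
- rewrite wfS odd2S half2S; congr r; apply: wf_stable; lia.
Qed.

Definition xdef (A : Type) (a e : A) (r : A -> A) (k : nat) : A :=
  if odd k then wz e r k./2 else a.

Lemma xdef_shape (A : Type) (a e : A) (r : A -> A) : shape a (xdef a e r) (wz e r).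
Proof. by move=> m; rewrite /xdef odd2 odd2S half2S. Qed.

Lemma auto_gen (T : finType) (B : Type) (e : T) (r : T -> T) (w : nat -> T)
  (A0 : B) (g : T -> B) (x : nat -> B) :
  wrec e r w -> (forall n, x (2 * n) = A0 /\ x (2 * n).+1 = g (w n)) -> automatic 2 x.
Proof.
move=> Hw Hx.
pose tau (c : bool * T) : seq (bool * T) :=
  let wn := if c.1 then r c.2 else e in [:: (false, wn); (true, wn)].
pose y n := (odd n, w n./2).
pose f (c : bool * T) := if c.1 then g c.2 else A0.
exists (bool * T)%type, tau, y, f.
split; first by [].
split.
- apply/fix_local => n j; rewrite (Lsz_unif _ _ (q := 2)) // => Hj.
  have Hwn : (if (y n).1 then r (y n).2 else e) = w n.
    rewrite /y /=; have [m [->|->]] := evod n.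
    + by rewrite odd2 (Hw m).1.
    + by rewrite odd2S half2S (Hw m).2.
  case: j Hj => [|[|j]] //= _.
  + by rewrite Hwn /y addn0 odd2 half2.
  + by rewrite Hwn /y addn1 odd2S half2S.
- move=> n; have [m [->|->]] := evod n.
  + by rewrite (Hx m).1 /f /y odd2.
  + by rewrite (Hx m).2 /f /y odd2S half2S.
Qed.

Definition r4 (l : L4) : L4 := match l with a4 => b4 | b4 => d4 | c4 => b4 | d4 => c4 end.
Definition r3 (l : L3) : L3 := match l with a3 => b3 | b3 => c3 | c3 => b3 end.

Lemma good4 : good sigma4 a4 b4 r4.
Proof. by split => // -[]. Qed.
Lemma good3 : good sigma3 a3 b3 r3.
Proof. by split => // -[]. Qed.

Theorem mainTheorem10 :
  (* (i) *)
  ((exists x : nat -> L4, is_fixpoint sigma4 x /\ x 0 = a4) /\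
   (forall x : nat -> L4, is_fixpoint sigma4 x -> x 0 = a4 -> automatic 2 x))
  /\
  (* (ii) *)
  ((exists x : nat -> L3, is_fixpoint sigma3 x /\ x 0 = a3) /\
   (forall x : nat -> L3, is_fixpoint sigma3 x -> x 0 = a3 ->
      automatic 2 x /\
      exists z : nat -> bool,
        is_fixpoint mu01 z /\
        (forall n, x (2 * n) = a3 /\
           ((x (2 * n).+1 = b3 /\ z n = false) \/
            (x (2 * n).+1 = c3 /\ z n = true))))).
Proof.
split; split.
- exists (xdef a4 b4 r4); split => //.
  exact: (shape_fix good4 (wz_rec _ _) (xdef_shape _ _ _)).
- move=> x Hf H0; have [Hw Hs] := fix_shape good4 Hf H0.
  exact: (auto_gen (T := L4) (g := id) Hw Hs).
- exists (xdef a3 b3 r3); split => //.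
  exact: (shape_fix good3 (wz_rec _ _) (xdef_shape _ _ _)).
- move=> x Hf H0; have [Hw Hs] := fix_shape good3 Hf H0.
  set w := (fun m => x (2 * m).+1) in Hw Hs.
  have Hne : forall m, w m != a3 := wrec_ne good3 Hw.
  pose z n := w n == c3.
  have Hxz : forall n, x (2 * n).+1 = if z n then c3 else b3.
    move=> n; rewrite (Hs n).2 /z; case: (w n) (Hne n) => //=.
  have Hz : wrec false negb z.
    move=> n; rewrite /z (Hw n).1 (Hw n).2; split => //.
    case: (w n) (Hne n) => //=.
  split.
  + apply: (auto_gen (T := bool) (A0 := a3) (g := fun b => if b then c3 else b3) Hz).
    by move=> n; rewrite (Hs n).1 Hxz.
  + exists z; split.
    * apply/fix_local => n j; rewrite (Lsz_unif _ _ (q := 2)); last by case.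
      case: j => [|[|j]] Hj.
      -- by rewrite addn0 (Hz n).1; case: (z n).
      -- by rewrite addn1 (Hz n).2; case: (z n).
      -- by move: Hj; case: (z n).
    * move=> n; split; first exact: (Hs n).1.
      rewrite Hxz; case: (z n); [right|left]; by [].
Qed.
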